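(* Let $A$ be a $[5,1]$ stabilizer tensor and $n,d\ge1$. For any $x\in\mathcal{P}_n$, $x\in S_L(A,n,d)$ if and only if $x$ commutes with every element of $\mathcal{Z}_L(A,n,d)$.
   Context: Pauli operators are considered modulo phases; $\mathcal{P}_n$ denotes the $n$-qubit Pauli group modulo phases. A $[5,1]$ stabilizer tensor is a tensor $A^{s}_{udlr}$ with all indices in $\{0,1\}$ such that the 5-qubit vector $\sum A^{s}_{udlr}|s,u,d,l,r\rangle$ is a stabilizer state; $s$ is the physical leg and $u,d,l,r$ are the virtual legs. Cylindrical stabilizer PEPS: place a copy of $A$ at every site $(i,j)$, $i\in\mathbb{Z}_n$, $j=1,\dots,d$. Contract the up leg of $(i,j)$ with the down leg of $(i+1,j)$ (indices mod $n$), and the right leg of $(i,j)$ with the left leg of $(i,j+1)$ for $j<d$; contract every physical leg with $|+\rangle$. The result is a stabilizer state on the $n$ left legs of column 1 (register $L$) and $n$ right legs of column $d$ (register $R$); $S(A,n,d)$ is its stabilizer group (mod phases). $S_L(A,n,d)\subseteq\mathcal{P}_n$ is the restriction of $S(A,n,d)$ to $L$ (the group of $L$-parts of its elements) and $\mathcal{Z}_L(A,n,d)$ is the center of $S_L(A,n,d)$. *)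

(* Defs.v *)
From HB Require Import structures.
From mathcomp Require Import all_boot all_order all_algebra.
From mathcomp Require Import algC.
Set Implicit Arguments. Unset Strict Implicit. Unset Printing Implicit Defensive.
Import Order.TTheory GRing.Theory Num.Theory.
Local Open Scope ring_scope.

Definition bits (m : nat) := {ffun 'I_m -> bool}.

Definition state (m : nat) := bits m -> algC.

(** n-qubit Pauli operators modulo phases, in the standard symplectic
    representation: (a, b) stands for X^a Z^b = (X^a_1 Z^b_1) (x) ... *)
Definition pauli (m : nat) := (bits m * bits m)%type.

Definition xorb_bits m (s t : bits m) : bits m := [ffun i => s i (+) t i].

Definition dotb m (s t : bits m) : bool := \big[addb/false]_(i < m) (s i && t i).

(** Two Paulis anticommute iff their symplectic product is 1. *)
Definition symp m (p q : pauli m) : bool := dotb p.1 q.2 (+) dotb p.2 q.1.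
Definition pcommute m (p q : pauli m) : bool := ~~ symp p q.

Definition pauli_act m (p : pauli m) (psi : state m) : state m :=
  fun t => let t' := xorb_bits t p.1 in
           (if dotb p.2 t' then -1 else 1) * psi t'.

Definition stabb m (psi : state m) (p : pauli m) : bool :=
  [exists k : 'I_4, [forall t, 'i ^+ k * pauli_act p psi t == psi t]].

Definition stab_group m (psi : state m) : {set pauli m} := [set p | stabb psi p].

Definition is_stabilizer_state m (psi : state m) : bool :=
  [exists t, psi t != 0] && (#|stab_group psi| == 2 ^ m)%N.

(** A [5,1] tensor A^s_{udlr}, given as A s u d l r. *)
Definition tensor := bool -> bool -> bool -> bool -> bool -> algC.

Definition tensor_vec (A : tensor) : state 5 :=
  fun t => A (t (inord 0)) (t (inord 1)) (t (inord 2)) (t (inord 3)) (t (inord 4)).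

Definition is_stabilizer_tensor (A : tensor) : bool :=
  is_stabilizer_state (tensor_vec A).

(** Sites (i,j), i : 'I_n (cyclic), j : 'I_d (0-based
    columns).  Vertical bond variable w (i,j) = down leg of (i,j) = up leg of
    (i-1,j); so the up leg of (i,j) is w (i+1,j) (indices mod n).  Horizontal variables h (i,k), k : 'I_(d+1):
    site (i,j) has left leg h (i,j) and right leg h (i,j+1); h (i,0) is the
    open left leg of row i (register L) and h (i,d) the open right leg
    (register R).  Physical legs are contracted with |+>, i.e. summed over
    (the overall nonzero factor 2^(-nd/2) is dropped; it does not affect
    the stabilizer group). The output register is 'I_(n+n): L first, then R. *)
Definition ordS' n (i : 'I_n) : 'I_n :=
  match n return 'I_n -> 'I_n with 0 => fun i => i | n'.+1 => fun i => ordS i end i.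

Definition peps_state (A : tensor) (n d : nat) : state (n + n) :=
  fun t =>
  \sum_(w : {ffun 'I_n * 'I_d -> bool})
  \sum_(h : {ffun 'I_n * 'I_d.+1 -> bool} |
          [forall i, (h (i, ord0) == t (lshift n i))
                     && (h (i, ord_max) == t (rshift n i))])
  \sum_(s : {ffun 'I_n * 'I_d -> bool})
  \prod_(ij : 'I_n * 'I_d)
     let i := ij.1 in let j := ij.2 in
     A (s ij) (w (ordS' i, j)) (w ij)
       (h (i, widen_ord (leqnSn d) j)) (h (i, lift ord0 j)).
Arguments peps_state : clear implicits.

Definition S_AND (A : tensor) (n d : nat) : {set pauli (n + n)} :=
  stab_group (peps_state A n d).

Definition restrL n (p : pauli (n + n)) : pauli n :=
  ([ffun i => p.1 (lshift n i)], [ffun i => p.2 (lshift n i)]).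

Definition S_L (A : tensor) (n d : nat) : {set pauli n} :=
  [set restrL p | p in S_AND A n d].

Definition Z_L (A : tensor) (n d : nat) : {set pauli n} :=
  [set y in S_L A n d | [forall z in S_L A n d, pcommute y z]].

(* Main.v *)
Require Import Defs.
From HB Require Import structures.
From mathcomp Require Import all_boot all_order all_algebra algC.
From mathcomp Require Import ring.
Set Implicit Arguments. Unset Strict Implicit. Unset Printing Implicit Defensive.

Import GRing.Theory.

Section Symp.
Variable I : finType.
Definition Pt := ({ffun I -> bool} * {ffun I -> bool})%type.
Definition xorf (s t : {ffun I -> bool}) : {ffun I -> bool} := [ffun i => s i (+) t i].
Definition padd (p q : Pt) : Pt := (xorf p.1 q.1, xorf p.2 q.2).
Definition f0 : {ffun I -> bool} := [ffun => false].
Definition pz : Pt := (f0, f0).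
Definition dotI (s t : {ffun I -> bool}) : bool := \big[addb/false]_(i : I) (s i && t i).
Definition sy (p q : Pt) : bool := dotI p.1 q.2 (+) dotI p.2 q.1.
Definition perp (W : {set Pt}) : {set Pt} := [set p | [forall w in W, ~~ sy p w]].
Definition subsp (W : {set Pt}) : Prop :=
  pz \in W /\ forall p q, p \in W -> q \in W -> padd p q \in W.

Lemma dotI_addl s t u : dotI (xorf s t) u = dotI s u (+) dotI t u.
Proof. by rewrite /dotI -big_split; apply: eq_bigr => i _; rewrite ffunE; case: (s i); case: (t i); case: (u i). Qed.
Lemma dotIC s t : dotI s t = dotI t s.
Proof. by apply: eq_bigr => i _; rewrite andbC. Qed.
Lemma dotI_addr s t u : dotI u (xorf s t) = dotI u s (+) dotI u t.
Proof. by rewrite dotIC dotI_addl !(dotIC u). Qed.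
Lemma dotI0 t : dotI f0 t = false.
Proof. by rewrite /dotI big1 // => i _; rewrite ffunE. Qed.
Lemma dotI0r t : dotI t f0 = false.
Proof. by rewrite dotIC dotI0. Qed.

Lemma sy_addl p q w : sy (padd p q) w = sy p w (+) sy q w.
Proof. by rewrite /sy /= !dotI_addl; case: (dotI p.1 w.2); case: (dotI q.1 w.2);
  case: (dotI p.2 w.1); case: (dotI q.2 w.1). Qed.
Lemma syC p q : sy p q = sy q p.
Proof. by rewrite /sy dotIC (dotIC p.2) addbC. Qed.
Lemma sy_addr p q w : sy w (padd p q) = sy w p (+) sy w q.
Proof. by rewrite syC sy_addl !(syC w). Qed.
Lemma sy0l w : sy pz w = false.
Proof. by rewrite /sy /= !dotI0. Qed.
Lemma sy0r w : sy w pz = false.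
Proof. by rewrite syC sy0l. Qed.

Lemma xorfC s t : xorf s t = xorf t s.
Proof. by apply/ffunP => i; rewrite !ffunE addbC. Qed.
Lemma xorfA s t u : xorf s (xorf t u) = xorf (xorf s t) u.
Proof. by apply/ffunP => i; rewrite !ffunE addbA. Qed.
Lemma xorf0 s : xorf s f0 = s.
Proof. by apply/ffunP => i; rewrite !ffunE addbF. Qed.
Lemma xorfK s : xorf s s = f0.
Proof. by apply/ffunP => i; rewrite !ffunE addbb. Qed.
Lemma paddC p q : padd p q = padd q p.
Proof. by rewrite /padd xorfC (xorfC p.2). Qed.
Lemma paddA p q r : padd p (padd q r) = padd (padd p q) r.
Proof. by rewrite /padd !xorfA. Qed.
Lemma padd0 p : padd p pz = p.
Proof. by case: p => a b; rewrite /padd /= !xorf0. Qed.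
Lemma padd0l p : padd pz p = p.
Proof. by rewrite paddC padd0. Qed.
Lemma paddK p : padd p p = pz.
Proof. by rewrite /padd !xorfK. Qed.
Lemma paddKl p q : padd p (padd p q) = q.
Proof. by rewrite paddA paddK padd0l. Qed.

Lemma perp_subsp (W : {set Pt}) : subsp (perp W).
Proof.
split; first by rewrite inE; apply/forall_inP => w _; rewrite sy0l.
move=> p q; rewrite !inE => /forall_inP Hp /forall_inP Hq; apply/forall_inP => w Hw.
by rewrite sy_addl (negbTE (Hp w Hw)) (negbTE (Hq w Hw)).
Qed.
Lemma perp_anti (U W : {set Pt}) : U \subset W -> perp W \subset perp U.
Proof.
move=> /subsetP sUW; apply/subsetP => p; rewrite !inE => /forall_inP H.
by apply/forall_inP => u Hu; apply: H; apply: sUW.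
Qed.
Lemma perpP (W : {set Pt}) p : reflect (forall w, w \in W -> sy p w = false) (p \in perp W).
Proof.
rewrite inE; apply: (iffP forall_inP) => H w Hw; first by apply/negbTE/H.
by rewrite H.
Qed.
Lemma sub_perpperp (W : {set Pt}) : W \subset perp (perp W).
Proof.
apply/subsetP => p Hp; apply/perpP => q /perpP Hq; by rewrite syC Hq.
Qed.

Local Open Scope ring_scope.
Local Notation F := 'F_2.
Local Notation N := #|I|.
Definition b2F (b : bool) : F := b%:R.
Lemma b2F_add a b : b2F (a (+) b) = b2F a + b2F b.
Proof. by case: a; case: b; apply/val_inj. Qed.
Lemma b2F_mul a b : b2F (a && b) = b2F a * b2F b.
Proof. by case: a; case: b; apply/val_inj. Qed.
Lemma b2F0 : b2F false = 0. Proof. by []. Qed.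
Lemma b2F_eq0 b : (b2F b == 0) = ~~ b.
Proof. by case: b. Qed.
Lemma F2_cases (x : F) : x = b2F (x != 0).
Proof. by case: x => [[|[|]]] //= ?; apply: val_inj. Qed.

Definition rv (s : {ffun I -> bool}) : 'rV[F]_N := \row_(j < N) b2F (s (enum_val j)).
Definition unrv (v : 'rV[F]_N) : {ffun I -> bool} := [ffun i => v 0 (enum_rank i) != 0].
Lemma rvK : cancel rv unrv.
Proof. by move=> s; apply/ffunP => i; rewrite ffunE mxE enum_rankK b2F_eq0 negbK. Qed.
Lemma unrvK : cancel unrv rv.
Proof. by move=> v; apply/rowP => j; rewrite mxE ffunE enum_valK -F2_cases. Qed.
Definition vec (p : Pt) : 'rV[F]_(N + N) := row_mx (rv p.1) (rv p.2).
Definition vecs (p : Pt) : 'rV[F]_(N + N) := row_mx (rv p.2) (rv p.1).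
Definition unvec (v : 'rV[F]_(N + N)) : Pt := (unrv (lsubmx v), unrv (rsubmx v)).
Definition unvecs (v : 'rV[F]_(N + N)) : Pt := (unrv (rsubmx v), unrv (lsubmx v)).
Lemma vecK : cancel vec unvec.
Proof. by case=> a b; rewrite /vec /unvec row_mxKl row_mxKr !rvK. Qed.
Lemma unvecK : cancel unvec vec.
Proof. by move=> v; rewrite /vec /unvec /= !unrvK hsubmxK. Qed.
Lemma vecsK : cancel vecs unvecs.
Proof. by case=> a b; rewrite /vecs /unvecs row_mxKl row_mxKr !rvK. Qed.
Lemma unvecsK : cancel unvecs vecs.
Proof. by move=> v; rewrite /vecs /unvecs /= !unrvK hsubmxK. Qed.
Lemma rv_add s t : rv (xorf s t) = rv s + rv t.
Proof. by apply/rowP => j; rewrite !mxE ffunE b2F_add. Qed.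
Lemma vec_add p q : vec (padd p q) = vec p + vec q.
Proof. by rewrite /vec /= !rv_add add_row_mx. Qed.
Lemma rv0 : rv f0 = 0.
Proof. by apply/rowP => j; rewrite !mxE ffunE. Qed.
Lemma vec0 : vec pz = 0.
Proof. by rewrite /vec /= rv0 row_mx0. Qed.

Lemma b2F_big (f : I -> bool) :
  b2F (\big[addb/false]_(i : I) f i) = \sum_(j < N) b2F (f (enum_val j)).
Proof.
rewrite (big_morph b2F b2F_add b2F0).
rewrite (reindex (@enum_val I I)) //=.
by apply: onW_bij; apply: enum_val_bij.
Qed.

Lemma rv_dot s t : (rv s *m (rv t)^T) 0 0 = b2F (dotI s t).
Proof.
rewrite /dotI b2F_big !mxE; apply: eq_bigr => j _; by rewrite !mxE b2F_mul.
Qed.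

Lemma vec_sy p w : (vecs p *m (vec w)^T) 0 0 = b2F (sy p w).
Proof.
rewrite /vecs /vec tr_row_mx mul_row_col mxE !rv_dot /sy b2F_add addrC.
by [].
Qed.

Lemma card_row (r K : nat) (M : 'M[F]_(r, K)) :
  #|[set v : 'rV[F]_K | (v <= M)%MS]| = (2 ^ \rank M)%N.
Proof.
have -> : [set v : 'rV[F]_K | (v <= M)%MS] = [set u *m row_base M | u : 'rV[F]_(\rank M)].
  apply/setP => v; rewrite inE -(eq_row_base M); apply/idP/imsetP.
    by case/submxP => u ->; exists u.
  by case=> u _ ->; apply: submxMl.
rewrite card_imset; last exact: (row_free_inj (row_base_free M)).
by rewrite card_mx card_Fp // mul1n.
Qed.

Lemma card_bij (f : Pt -> 'rV[F]_(N + N)) g (P : pred 'rV[F]_(N + N)) :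
  cancel f g -> cancel g f -> #|[set p | P (f p)]| = #|[set v | P v]|.
Proof.
move=> fK gK; have -> : [set v | P v] = f @: [set p | P (f p)].
  apply/setP => v; rewrite inE; apply/idP/imsetP.
    by move=> Pv; exists (g v); rewrite ?inE gK.
  by case=> p; rewrite inE => Pp ->.
by rewrite card_imset //; apply: can_inj fK.
Qed.

Section Sub.
Variable W : {set Pt}.
Hypothesis HW : subsp W.
Definition MW : 'M[F]_(#|W|, N + N) := \matrix_(j < #|W|) vec (enum_val j).

Lemma unvec_add u v : unvec (u + v) = padd (unvec u) (unvec v).
Proof. by apply: (can_inj vecK); rewrite vec_add !unvecK. Qed.

Lemma in_MW p : (vec p <= MW)%MS = (p \in W).
Proof.
apply/idP/idP; last first.
  move=> Hp; rewrite -(enum_rankK_in Hp Hp) -(rowK (fun j => vec (enum_val j))).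
  exact: row_sub.
case/submxP => u Hu; rewrite -(vecK p) Hu mulmx_sum_row.
apply: (big_ind (fun v => unvec v \in W)).
- by rewrite -vec0 vecK; case: HW.
- by move=> a b Ha Hb; rewrite unvec_add; case: HW => _; apply.
move=> j _; rewrite (F2_cases (u 0 j)); case: (u 0 j != 0).
  by rewrite scale1r rowK vecK enum_valP.
by rewrite scale0r -vec0 vecK; case: HW.
Qed.

Lemma entry_row (K r : nat) (A : 'rV[F]_K) (B : 'M[F]_(r, K)) j :
  (A *m B^T) 0 j = (A *m (row j B)^T) 0 0.
Proof. by rewrite !mxE; apply: eq_bigr => k _; rewrite !mxE. Qed.

Lemma in_perpMW p : (vecs p <= kermx MW^T)%MS = (p \in perp W).
Proof.
apply/sub_kermxP/perpP.
  move=> H w Hw; move/rowP: H => /(_ (enum_rank_in Hw w)).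
  rewrite entry_row rowK (enum_rankK_in Hw Hw) vec_sy mxE.
  by move/eqP; rewrite b2F_eq0 => /negbTE.
move=> H; apply/rowP => j; rewrite entry_row rowK vec_sy mxE H //.
exact: enum_valP.
Qed.

Lemma card_W : #|W| = (2 ^ \rank MW)%N.
Proof.
rewrite -card_row -(card_bij (fun v => (v <= MW)%MS) vecK unvecK).
by apply: eq_card => p; rewrite inE in_MW.
Qed.

Lemma card_perpW : #|perp W| = (2 ^ (N + N - \rank MW))%N.
Proof.
rewrite -(mxrank_tr MW) -mxrank_ker -card_row.
rewrite -(card_bij (fun v => (v <= kermx MW^T)%MS) vecsK unvecsK).
by apply: eq_card => p; rewrite [RHS]inE /= in_perpMW.
Qed.

Lemma card_perp : (#|W| * #|perp W|)%N = (2 ^ (N + N))%N.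
Proof. by rewrite card_W card_perpW -expnD subnKC // rank_leq_col. Qed.
End Sub.

Lemma perpperp (W : {set Pt}) : subsp W -> perp (perp W) = W.
Proof.
move=> HW; apply/esym/eqP; rewrite eqEcard sub_perpperp /=.
have H1 := card_perp HW; have H2 := card_perp (perp_subsp W).
have Hp : (0 < #|perp W|)%N.
  by apply/card_gt0P; exists pz; case: (perp_subsp W).
have : (#|perp W| * #|W| = #|perp W| * #|perp (perp W)|)%N by rewrite mulnC H1 H2.
by move/eqP; rewrite eqn_pmul2l // => /eqP ->.
Qed.

End Symp.


Section Gen.
Variable I : finType.
Local Notation Pt := (Pt I).
Local Notation pz := (pz I).

Definition sumset (U W : {set Pt}) : {set Pt} := [set padd u w | u in U, w in W].

Lemma sumset_subsp (U W : {set Pt}) : subsp U -> subsp W -> subsp (sumset U W).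
Proof.
move=> [U0 HU] [W0 HW]; split.
  by apply/imset2P; exists pz pz => //; rewrite padd0.
move=> p q /imset2P [u1 w1 Hu1 Hw1 ->] /imset2P [u2 w2 Hu2 Hw2 ->].
apply/imset2P; exists (padd u1 u2) (padd w1 w2); [exact: HU | exact: HW |].
by rewrite !paddA -(paddA u1 w1) (paddC w1) !paddA.
Qed.

Lemma subsp_cap (U W : {set Pt}) : subsp U -> subsp W -> subsp (U :&: W).
Proof.
move=> [U0 HU] [W0 HW]; split; first by rewrite inE U0 W0.
by move=> p q; rewrite !inE => /andP [??] /andP [??]; rewrite HU ?HW.
Qed.

Lemma perp_cap (U W : {set Pt}) : subsp U -> subsp W ->
  perp (U :&: W) \subset sumset (perp U) (perp W).
Proof.
move=> HU HW; set X := sumset _ _.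
have HX : subsp X by apply: sumset_subsp; apply: perp_subsp.
have sUX : perp U \subset X.
  apply/subsetP => u Hu; apply/imset2P; exists u pz => //; last by rewrite padd0.
  by case: (perp_subsp W).
have sWX : perp W \subset X.
  apply/subsetP => w Hw; apply/imset2P; exists pz w => //; last by rewrite padd0l.
  by case: (perp_subsp U).
have : perp X \subset U :&: W.
  rewrite subsetI; apply/andP; split.
    by rewrite -(perpperp HU); apply: perp_anti.
  by rewrite -(perpperp HW); apply: perp_anti.
by move/perp_anti; rewrite perpperp.
Qed.

Lemma lagrangian (W : {set Pt}) : subsp W -> (forall p q, p \in W -> q \in W -> sy p q = false) ->
  #|W| = (2 ^ #|I|)%N -> perp W \subset W.
Proof.
move=> HW Hiso Hc.
have sW : W \subset perp W by apply/subsetP => p Hp; apply/perpP => q Hq; apply: Hiso.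
have := card_perp HW; rewrite Hc expnD => /eqP; rewrite eqn_pmul2l ?expn_gt0 // => /eqP Hp.
have : W == perp W by rewrite eqEcard sW Hp Hc leqnn.
by move/eqP <-.
Qed.
End Gen.

Section Emb.
Variables (I J : finType) (o : J -> I).
Hypothesis o_inj : injective o.

Definition restr (g : Pt I) : Pt J := ([ffun j => g.1 (o j)], [ffun j => g.2 (o j)]).
Definition emb_f (s : {ffun J -> bool}) : {ffun I -> bool} :=
  [ffun i => if [pick j | o j == i] is Some j then s j else false].
Definition emb (y : Pt J) : Pt I := (emb_f y.1, emb_f y.2).

Lemma emb_fE s j : emb_f s (o j) = s j.
Proof.
rewrite ffunE; case: pickP => [j' /eqP /o_inj -> // | /(_ j)]; by rewrite eqxx.
Qed.
Lemma restr_emb y : restr (emb y) = y.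
Proof. by case: y => a b; rewrite /restr /=; congr pair; apply/ffunP => j; rewrite ffunE emb_fE. Qed.
Lemma restr_add p q : restr (padd p q) = padd (restr p) (restr q).
Proof. by rewrite /restr /padd /xorf /=; congr pair; apply/ffunP => j; rewrite !ffunE. Qed.
Lemma restr0 : restr (pz I) = pz J.
Proof. by rewrite /restr /pz /f0 /=; congr pair; apply/ffunP => j; rewrite !ffunE. Qed.

Lemma dot_emb s t : dotI (emb_f s) t = dotI s [ffun j => t (o j)].
Proof.
rewrite /dotI.
rewrite (eq_bigr (fun i => if i \in [set o j | j in J] then emb_f s i && t i else false)); last first.
  move=> i _; case: ifP => // /imsetP Hn; rewrite ffunE; case: pickP => // j /eqP Hj.
  by case: Hn; exists j.
rewrite -big_mkcond big_imset /=; last by move=> ? ? _ _; apply: o_inj.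
by apply: eq_bigr => j _; rewrite emb_fE ffunE.
Qed.

Lemma sy_emb y g : sy (emb y) g = sy y (restr g).
Proof. by rewrite /sy /= !dot_emb. Qed.

Lemma restr_subsp (S : {set Pt I}) : subsp S -> subsp [set restr p | p in S].
Proof.
move=> [S0 HS]; split; first by apply/imsetP; exists (pz I) => //; rewrite restr0.
move=> p q /imsetP [p' Hp' ->] /imsetP [q' Hq' ->]; apply/imsetP.
by exists (padd p' q'); [apply: HS | rewrite restr_add].
Qed.

Lemma D1 (SP D : {set Pt I}) :
  subsp SP -> perp SP \subset SP -> subsp D ->
  (forall d d', d \in D -> d' \in D -> sy d d' = false) ->
  (forall d, d \in D -> restr d = pz J) ->
  perp [set restr g | g in SP :&: perp D] \subset [set restr g | g in SP :&: perp D].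
Proof.
move=> HSP pSP HD Diso Dr; apply/subsetP => y /perpP Hy.
have He : emb y \in perp (SP :&: perp D).
  by apply/perpP => g Hg; rewrite sy_emb; apply: Hy; apply/imsetP; exists g.
have := subsetP (perp_cap HSP (perp_subsp D)) _ He.
rewrite perpperp // => /imset2P [s dd Hs Hdd Hsd].
have Hs' : s = padd (emb y) dd by rewrite Hsd -paddA paddK padd0.
apply/imsetP; exists s.
  rewrite inE (subsetP pSP _ Hs) /=; apply/perpP => d Hd.
  by rewrite Hs' sy_addl sy_emb Dr // sy0r Diso.
by rewrite Hs' restr_add restr_emb Dr // padd0.
Qed.

Lemma partF (S : {set Pt I}) : subsp S -> perp S \subset S ->
  forall x, (forall z, z \in [set y in [set restr p | p in S] |
                              [forall z in [set restr p | p in S], ~~ sy y z]] -> ~~ sy x z) ->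
  x \in [set restr p | p in S].
Proof.
move=> HS pS x Hx; set SJ := [set restr p | p in S].
have HSJ : subsp SJ by apply: restr_subsp.
have sub : perp SJ \subset [set y in SJ | [forall z in SJ, ~~ sy y z]].
  apply/subsetP => y Hy; rewrite inE; apply/andP; split; last by rewrite inE in Hy.
  have He : emb y \in perp S.
    by apply/perpP => p Hp; rewrite sy_emb; move/perpP: Hy; apply; apply/imsetP; exists p.
  by apply/imsetP; exists (emb y); [apply: (subsetP pS) | rewrite restr_emb].
rewrite -(perpperp HSJ); apply: (subsetP (perp_anti sub)).
by apply/perpP => z Hz; apply/negbTE/Hx.
Qed.
End Emb.

Import Order.TTheory GRing.Theory Num.Theory.
Local Open Scope ring_scope.

Definition sg (b : bool) : algC := if b then -1 else 1.
Lemma sgD a b : sg (a (+) b) = sg a * sg b.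
Proof. by case: a; case: b; rewrite /sg /= ?mulN1r ?mulr1 ?mul1r ?opprK. Qed.
Lemma sg_inj : injective sg.
Proof.
have H : (-1 : algC) != 1 by rewrite -subr_eq0 -opprD oppr_eq0 (pnatr_eq0 _ 2).
by case; case => //= /eqP; rewrite ?(negbTE H) // eq_sym (negbTE H).
Qed.
Lemma sg_neq0 b : sg b != 0.
Proof. by case: b; rewrite /sg ?oppr_eq0 oner_eq0. Qed.

Lemma i4 : 'i ^+ 4 = 1 :> algC.
Proof. by rewrite (_ : 4 = 2 * 2)%N // exprM sqrCi sqrrN expr1n. Qed.
Lemma i_mod4 k : 'i ^+ (k %% 4) = 'i ^+ k :> algC.
Proof. by rewrite {2}(divn_eq k 4) exprD mulnC exprM i4 expr1n mul1r. Qed.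
Lemma i2sg (b : bool) : 'i ^+ (2 * b) * sg b = 1 :> algC.
Proof. by case: b; rewrite /sg ?muln1 ?muln0 ?expr0 ?mulr1 // sqrCi mulrNN mulr1. Qed.

Section Stab.
Variable m : nat.
Implicit Types (p q : pauli m) (psi : state m).

Lemma paE p psi t : pauli_act p psi t = sg (dotb p.2 (xorb_bits t p.1)) * psi (xorb_bits t p.1).
Proof. by []. Qed.

Lemma dotbE (s t : bits m) : dotb s t = dotI s t. Proof. by []. Qed.
Lemma sympE p q : symp p q = sy p q. Proof. by []. Qed.

Lemma pa_add p q psi t :
  pauli_act (padd p q) psi t = sg (dotb p.2 q.1) * pauli_act p (pauli_act q psi) t.
Proof.
rewrite !paE /=.
have -> : xorb_bits t (xorf p.1 q.1) = xorb_bits (xorb_bits t p.1) q.1.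
  by apply/ffunP => i; rewrite !ffunE addbA.
rewrite !dotbE dotI_addl (dotI_addr _ _ p.2) sgD sgD.
ring.
Qed.

Lemma pa_ext p (f g : state m) t : (forall u, f u = g u) -> pauli_act p f t = pauli_act p g t.
Proof. by move=> H; rewrite !paE H. Qed.

Lemma pa_scale p c (f : state m) t : pauli_act p (fun u => c * f u) t = c * pauli_act p f t.
Proof. by rewrite !paE mulrCA. Qed.

Lemma stabP psi p :
  reflect (exists k : nat, forall t, 'i ^+ k * pauli_act p psi t = psi t) (p \in stab_group psi).
Proof.
rewrite inE; apply: (iffP existsP).
  by case=> k /forallP H; exists k => t; apply/eqP/H.
case=> k H; exists (Ordinal (ltn_pmod k (isT : (0 < 4)%N))); apply/forallP => t /=.
by rewrite i_mod4 H.
Qed.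

Lemma stab_comp psi p q k l :
  (forall t, 'i ^+ k * pauli_act p psi t = psi t) ->
  (forall t, 'i ^+ l * pauli_act q psi t = psi t) ->
  forall t, 'i ^+ (k + l) * pauli_act p (pauli_act q psi) t = psi t.
Proof.
move=> Hp Hq t; rewrite exprD -mulrA -pa_scale -Hp; congr (_ * _).
by apply: pa_ext => u; rewrite Hq.
Qed.

Lemma stab_iso psi p q : (exists t, psi t != 0) ->
  p \in stab_group psi -> q \in stab_group psi -> symp p q = false.
Proof.
case=> t0 Ht0 /stabP [k Hp] /stabP [l Hq].
have E1 := stab_comp Hp Hq t0; have E2 := stab_comp Hq Hp t0.
have E : sg (dotb p.2 q.1) * pauli_act p (pauli_act q psi) t0 =
         sg (dotb q.2 p.1) * pauli_act q (pauli_act p psi) t0.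
  by rewrite -!pa_add paddC.
have : sg (dotb p.2 q.1) * psi t0 = sg (dotb q.2 p.1) * psi t0.
  by rewrite -{1}E1 -E2 addnC mulrCA E mulrCA.
move/(mulIf Ht0)/sg_inj => Hx.
move: Hx; rewrite !dotbE sympE /sy (dotIC p.1) => ->; apply: addbb.
Qed.

Lemma stab_add psi p q :
  p \in stab_group psi -> q \in stab_group psi -> padd p q \in stab_group psi.
Proof.
move=> /stabP [k Hp] /stabP [l Hq]; apply/stabP.
exists (k + l + 2 * dotb p.2 q.1)%N => t.
rewrite pa_add exprD -(stab_comp Hp Hq t).
transitivity ('i ^+ (k + l) * ('i ^+ (2 * dotb p.2 q.1) * sg (dotb p.2 q.1)) *
   pauli_act p (pauli_act q psi) t); first by ring.
by rewrite i2sg mulr1.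
Qed.

Lemma stab_pz psi : pz _ \in stab_group psi.
Proof.
apply/stabP; exists 0%N => t; rewrite expr0 mul1r paE /=.
have -> : xorb_bits t (f0 _) = t by apply/ffunP => i; rewrite !ffunE addbF.
by rewrite dotbE dotI0 /sg mul1r.
Qed.

Lemma stab_subsp psi : subsp (stab_group psi).
Proof. by split; [apply: stab_pz | move=> p q; apply: stab_add]. Qed.

Lemma stab_zero psi : (forall t, psi t = 0) -> stab_group psi = setT.
Proof.
move=> H; apply/setP => p; rewrite in_setT; apply/stabP; exists 0%N => t.
by rewrite paE !H !mulr0.
Qed.
End Stab.

Local Close Scope ring_scope.

Import Order.TTheory GRing.Theory Num.Theory.

Section Peps.
Variables (A : tensor) (n' d' : nat).
Local Notation n := n'.+1.
Local Notation d := d'.+1.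
Definition Site := ('I_n * 'I_d)%type.
Definition Leg := (Site * 'I_5)%type.
Definition k0 : 'I_5 := @Ordinal 5 0 isT.
Definition k1 : 'I_5 := @Ordinal 5 1 isT.
Definition k2 : 'I_5 := @Ordinal 5 2 isT.
Definition k3 : 'I_5 := @Ordinal 5 3 isT.
Definition k4 : 'I_5 := @Ordinal 5 4 isT.

Definition up (x : Site) : Site := (ordS' x.1, x.2).
Lemma up_inj : injective up.
Proof.
move=> [i j] [i' j'] E; have /= E1 := congr1 fst E; have /= E2 := congr1 snd E.
by rewrite (ordS_inj E1) E2.
Qed.

Definition Lleg (i : 'I_n) : Leg := ((i, ord0), k3).
Definition Rleg (i : 'I_n) : Leg := ((i, ord_max), k4).
Definition outo (o : 'I_(n + n)) : Leg :=
  match split o with inl i => Lleg i | inr i => Rleg i end.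
Lemma outoL i : outo (lshift n i) = Lleg i.
Proof. by rewrite /outo (unsplitK (inl _ i)). Qed.
Lemma outoR i : outo (rshift n i) = Rleg i.
Proof. by rewrite /outo (unsplitK (inr _ i)). Qed.
Lemma outo_inj : injective outo.
Proof.
move=> o1 o2; rewrite -(splitK o1) -(splitK o2).
case: (split o1) => i1; case: (split o2) => i2;
  rewrite ?outoL ?outoR /Lleg /Rleg => -[] // -> //.
Qed.

Definition pair_ok (a : {ffun Leg -> bool}) : bool :=
  [forall x : Site, a (x, k1) == a (up x, k2)] &&
  [forall i : 'I_n, forall j : 'I_d',
     a ((i, widen_ord (leqnSn d') j), k4) == a ((i, lift ord0 j), k3)].

Lemma pair_okP (a : {ffun Leg -> bool}) : reflect ((forall x, a (x, k1) = a (up x, k2)) /\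
   (forall i (j : 'I_d'), a ((i, widen_ord (leqnSn d') j), k4) = a ((i, lift ord0 j), k3)))
  (pair_ok a).
Proof.
apply: (iffP andP) => [[/forallP H1 /forallP H2] | [H1 H2]]; split.
- by move=> x; apply/eqP/H1.
- by move=> i j; move/forallP: (H2 i) => /(_ j) /eqP.
- by apply/forallP => x; rewrite H1.
- by apply/forallP => i; apply/forallP => j; rewrite H2.
Qed.

Definition xsum (F : Leg -> bool) := \big[addb/false]_(l : Leg) F l.

Lemma sum_Leg (F : Leg -> bool) :
  \big[addb/false]_(l : Leg) F l = \big[addb/false]_(x : Site) \big[addb/false]_(k : 'I_5) F (x, k).
Proof. by rewrite pair_big; apply: eq_bigr => -[]. Qed.

Lemma sum_5 (F : 'I_5 -> bool) :
  \big[addb/false]_(k : 'I_5) F k = F k0 (+) F k1 (+) F k2 (+) F k3 (+) F k4.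
Proof.
rewrite !big_ord_recl big_ord0 addbF !addbA.
have E (i j : 'I_5) : val i = val j -> F i = F j by move=> /val_inj ->.
rewrite (E ord0 k0) // (E (lift ord0 ord0) k1) // (E (lift ord0 (lift ord0 ord0)) k2) //.
by rewrite (E (lift ord0 (lift ord0 (lift ord0 ord0))) k3) // (E (lift ord0 (lift ord0 (lift ord0 (lift ord0 ord0)))) k4).
Qed.

Lemma pair_sum (a b : {ffun Leg -> bool}) : pair_ok a -> pair_ok b -> (forall x, a (x, k0) = false) ->
  \big[addb/false]_(l : Leg) (a l && b l) =
  \big[addb/false]_(i : 'I_n) ((a (Lleg i) && b (Lleg i)) (+) (a (Rleg i) && b (Rleg i))).
Proof.
move=> /pair_okP [Ha1 Ha2] /pair_okP [Hb1 Hb2] Ha0.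
set f := fun l => a l && b l.
have f1 x : f (x, k1) = f (up x, k2) by rewrite /f Ha1 Hb1.
have f2 i j : f ((i, widen_ord (leqnSn d') j), k4) = f ((i, lift ord0 j), k3) by rewrite /f Ha2 Hb2.
rewrite sum_Leg (eq_bigr (fun x => f (x, k1) (+) f (x, k2) (+) (f (x, k3) (+) f (x, k4)))); last first.
  by move=> x _; rewrite sum_5 /f Ha0 /= !addbA.
rewrite big_split big_split /=.
have -> : \big[addb/false]_(x : Site) f (x, k1) = \big[addb/false]_(x : Site) f (x, k2).
  rewrite [RHS](reindex_inj up_inj) /=; apply: eq_bigr => x _; exact: f1.
rewrite addbb addFb.
have -> : forall G : Site -> bool, \big[addb/false]_(x : Site) G x =
    \big[addb/false]_(i : 'I_n) \big[addb/false]_(j : 'I_d) G (i, j).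
  by move=> G; rewrite pair_big; apply: eq_bigr => -[].
apply: eq_bigr => i _.
rewrite big_split /= big_ord_recl big_ord_recr /=.
have -> : \big[addb/false]_(j < d') f ((i, lift ord0 j), k3) =
          \big[addb/false]_(j < d') f ((i, widen_ord (leqnSn d') j), k4).
  by apply: eq_bigr => j _; rewrite f2.
set X := \big[addb/false]_(j < d') _.
by rewrite -addbA (addbA X) addbb addFb.
Qed.


Local Notation PL := (Pt Leg).
Definition rsite (g : PL) (x : Site) : pauli 5 := restr (fun k : 'I_5 => (x, k)) g.
Definition SA := stab_group (tensor_vec A).
Definition SPhi : {set PL} := [set g | [forall x, rsite g x \in SA]].

Lemma SPhi_subsp : subsp SPhi.
Proof.
split.
  rewrite inE; apply/forallP => x; rewrite /rsite restr0; exact: stab_pz.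
move=> p q; rewrite !inE => /forallP Hp /forallP Hq; apply/forallP => x.
rewrite /rsite restr_add; apply: stab_add; [exact: Hp | exact: Hq].
Qed.

Lemma dot_site (s t : {ffun Leg -> bool}) :
  dotI s t = \big[addb/false]_(x : Site) dotI [ffun k => s (x, k)] [ffun k => t (x, k)].
Proof. by rewrite /dotI sum_Leg; apply: eq_bigr => x _; apply: eq_bigr => k _; rewrite !ffunE. Qed.

Lemma sy_site g h : sy g h = \big[addb/false]_(x : Site) sy (rsite g x) (rsite h x).
Proof. by rewrite /sy !dot_site -big_split. Qed.

Hypothesis HA : is_stabilizer_tensor A.
Lemma SA_nz : exists t, (tensor_vec A t != 0)%R.
Proof. by move: HA => /andP [/existsP [t Ht] _]; exists t. Qed.
Lemma card_SA : #|SA| = 32.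
Proof. by move: HA => /andP [_ /eqP]. Qed.

Lemma SPhi_iso g h : g \in SPhi -> h \in SPhi -> sy g h = false.
Proof.
rewrite !inE => /forallP Hg /forallP Hh; rewrite sy_site big1 // => x _.
exact: (stab_iso SA_nz (Hg x) (Hh x)).
Qed.

Lemma card_bij' (T U : finType) (f : T -> U) g (P : pred U) :
  cancel f g -> cancel g f -> #|[set x | P (f x)]| = #|[set y | P y]|.
Proof.
move=> fK gK; have -> : [set y | P y] = f @: [set x | P (f x)].
  apply/setP => v; rewrite inE; apply/idP/imsetP.
    by move=> Pv; exists (g v); rewrite ?inE gK.
  by case=> p; rewrite inE => Pp ->.
by rewrite card_imset //; apply: can_inj fK.
Qed.

Definition Fs (g : PL) : {ffun Site -> pauli 5} := [ffun x => rsite g x].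
Definition Finv (f : {ffun Site -> pauli 5}) : PL :=
  ([ffun l => (f l.1).1 l.2], [ffun l => (f l.1).2 l.2]).
Lemma FsK : cancel Fs Finv.
Proof. by case=> a b; rewrite /Fs /Finv; congr pair; apply/ffunP => -[x k]; rewrite !ffunE. Qed.
Lemma FinvK : cancel Finv Fs.
Proof.
move=> f; apply/ffunP => x; rewrite ffunE /rsite /restr /=.
by case E : (f x) => [a b]; congr pair; apply/ffunP => k; rewrite !ffunE E.
Qed.

Lemma card_SPhi : #|SPhi| = (2 ^ #|{: Leg}|)%N.
Proof.
have -> : SPhi = [set g | Fs g \in ffun_on SA].
  apply/setP => g; rewrite !inE; apply/forallP/ffun_onP => H x; move: (H x); by rewrite ffunE.
rewrite (card_bij' (fun f => f \in ffun_on SA) FsK FinvK).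
rewrite (eq_card (B := ffun_on SA)); last by move=> f; rewrite inE.
rewrite card_ffun_on card_SA /Leg /Site !card_prod !card_ord.
by rewrite (_ : 32 = 2 ^ 5)%N // -expnM mulnC.
Qed.

Lemma SPhi_lag : perp SPhi \subset SPhi.
Proof. apply: lagrangian; [exact: SPhi_subsp | exact: SPhi_iso | exact: card_SPhi]. Qed.


Definition delta (l0 : Leg) : {ffun Leg -> bool} := [ffun l => l == l0].
Lemma dot_delta s l0 : dotI s (delta l0) = s l0.
Proof.
rewrite /dotI (bigD1 l0) //= ffunE eqxx andbT big1 ?addbF // => l /negbTE H.
by rewrite ffunE H andbF.
Qed.

Definition Dset : {set PL} :=
  [set g | [&& restr outo g == pz _, [forall x, ~~ g.2 (x, k0)], pair_ok g.1 & pair_ok g.2]].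

Lemma out_zero g : restr outo g = pz _ -> forall o, g.1 (outo o) = false /\ g.2 (outo o) = false.
Proof.
move=> H o; have H1 : (restr outo g).1 o = (pz _).1 o by rewrite H.
have H2 : (restr outo g).2 o = (pz _).2 o by rewrite H.
by move: H1 H2; rewrite /= !ffunE.
Qed.

Lemma DsetP g : g \in Dset ->
  [/\ restr outo g = pz _, forall x, g.2 (x, k0) = false, pair_ok g.1 & pair_ok g.2].
Proof.
by rewrite inE => /and4P [/eqP H1 /forallP H2 H3 H4]; split => // x; apply/negbTE/H2.
Qed.

Lemma Dset_mem (a b : {ffun Leg -> bool}) : (forall o, a (outo o) = false) ->
  (forall o, b (outo o) = false) -> (forall x, b (x, k0) = false) -> pair_ok a -> pair_ok b ->
  (a, b) \in Dset.
Proof.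
move=> Ha Hb Hb0 pa pb; rewrite inE; apply/and4P; split => //.
  by apply/eqP; rewrite /restr /pz /f0 /=; congr pair; apply/ffunP => o; rewrite !ffunE.
by apply/forallP => x; rewrite Hb0.
Qed.

Lemma pair_ok0 : pair_ok (f0 _).
Proof. by apply/pair_okP; split => *; rewrite !ffunE. Qed.

Lemma pair_ok_add a b : pair_ok a -> pair_ok b -> pair_ok (xorf a b).
Proof.
move=> /pair_okP [Ha1 Ha2] /pair_okP [Hb1 Hb2]; apply/pair_okP; split.
  by move=> x; rewrite !ffunE Ha1 Hb1.
by move=> i j; rewrite !ffunE Ha2 Hb2.
Qed.

Lemma Dset_subsp : subsp Dset.
Proof.
split.
  by apply: Dset_mem => *; rewrite ?ffunE //; apply: pair_ok0.
move=> p q /DsetP [Hp1 Hp2 Hp3 Hp4] /DsetP [Hq1 Hq2 Hq3 Hq4].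
rewrite inE; apply/and4P; split; last 2 first.
- exact: pair_ok_add.
- exact: pair_ok_add.
- by rewrite restr_add Hp1 Hq1 padd0.
by apply/forallP => x; rewrite ffunE Hp2 Hq2.
Qed.

Lemma dot_half a b : pair_ok a -> pair_ok b -> (forall x, a (x, k0) = false) ->
  (forall o, a (outo o) = false) -> dotI b a = false.
Proof.
move=> pa pb a0 ao; rewrite /dotI (eq_bigr (fun l => a l && b l)); last by move=> l _; rewrite andbC.
rewrite pair_sum // big1 // => i _.
by rewrite -outoL -outoR !ao.
Qed.

Lemma Dset_iso e e' : e \in Dset -> e' \in Dset -> sy e e' = false.
Proof.
move=> /DsetP [H1 H2 H3 H4] /DsetP [H1' H2' H3' H4'].
rewrite /sy dot_half //; last by move=> o; case: (out_zero H1' o).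
rewrite dotIC dot_half //; by move=> o; case: (out_zero H1 o).
Qed.

Lemma xor_false a b : a (+) b = false -> a = b.
Proof. by case: a; case: b. Qed.

Lemma outo_k o : ((outo o).2 == k3) || ((outo o).2 == k4).
Proof. by rewrite /outo; case: (split o). Qed.

Lemma widen_eq (a b : 'I_d') : (widen_ord (leqnSn d') a == widen_ord (leqnSn d') b) = (a == b).
Proof. by apply/eqP/eqP => [/(congr1 val) /= /val_inj | ->]. Qed.

Lemma C_facts g : g \in perp Dset ->
  [/\ forall x, g.2 (x, k0) = false, pair_ok g.1 & pair_ok g.2].
Proof.
move/perpP => Hg.
have Hx : forall (x : Site), g.2 (x, k0) = false.
  move=> x; have Hm : (delta (x, k0), f0 _) \in Dset.
    apply: Dset_mem.
    - by move=> o; rewrite ffunE; case: eqP => // Ho; move: (outo_k o); rewrite Ho.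
    - by move=> o; rewrite ffunE.
    - by move=> y; rewrite ffunE.
    - by apply/pair_okP; split => *; rewrite !ffunE !xpair_eqE /= ?andbF.
    - exact: pair_ok0.
  by have := Hg _ Hm; rewrite /sy /= dotI0r dot_delta.
have V : forall x, (xorf (delta (x, k1)) (delta (up x, k2)), f0 _) \in Dset /\ (f0 _, xorf (delta (x, k1)) (delta (up x, k2))) \in Dset.
  move=> x.
  have vo : forall o, xorf (delta (x, k1)) (delta (up x, k2)) (outo o) = false.
    move=> o; rewrite !ffunE; have := outo_k o.
    by case: (outo o) => [y k] /= /orP [] /eqP ->; rewrite !xpair_eqE /= !andbF.
  have vp : pair_ok (xorf (delta (x, k1)) (delta (up x, k2))).
    apply/pair_okP; split; last by move=> i j; rewrite !ffunE !xpair_eqE /= !andbF.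
    move=> y; rewrite !ffunE !xpair_eqE /= !andbT !andbF (inj_eq (@ordS_inj _)) addbF.
    by rewrite -xpair_eqE -!surjective_pairing.
  by split; apply: Dset_mem => //; try exact: pair_ok0; move=> *; rewrite !ffunE ?xpair_eqE /= ?andbF.
have H : forall i (j : 'I_d'), (xorf (delta ((i, widen_ord (leqnSn d') j), k4)) (delta ((i, lift ord0 j), k3)), f0 _) \in Dset /\ (f0 _, xorf (delta ((i, widen_ord (leqnSn d') j), k4)) (delta ((i, lift ord0 j), k3))) \in Dset.
  move=> i j.
  have vo : forall o, xorf (delta ((i, widen_ord (leqnSn d') j), k4)) (delta ((i, lift ord0 j), k3)) (outo o) = false.
    move=> o; rewrite /outo; case: (split o) => i'; rewrite /Lleg /Rleg !ffunE !xpair_eqE /= ?andbF ?andbT /=.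
      by [].
    rewrite (_ : (ord_max == widen_ord _ j) = false) ?andbF //.
    by apply/negbTE; rewrite -val_eqE /= neq_ltn ltn_ord orbT.
  have vp : pair_ok (xorf (delta ((i, widen_ord (leqnSn d') j), k4)) (delta ((i, lift ord0 j), k3))).
    apply/pair_okP; split; first by move=> y; rewrite !ffunE !xpair_eqE /= !andbF.
    move=> i' j'; rewrite !ffunE !xpair_eqE /= !andbT !andbF /=.
    by rewrite widen_eq addbF.
  by split; apply: Dset_mem => //; try exact: pair_ok0; move=> *; rewrite !ffunE ?xpair_eqE /= ?andbF.
split => //.
  apply/pair_okP; split.
    move=> x; apply: xor_false; have := Hg _ (proj2 (V x)).
    by rewrite /sy /= dotI0r addbF dotI_addr !dot_delta.
  move=> i j; apply: xor_false; have := Hg _ (proj2 (H i j)).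
  by rewrite /sy /= dotI0r addbF dotI_addr !dot_delta.
apply/pair_okP; split.
  move=> x; apply: xor_false; have := Hg _ (proj1 (V x)).
  by rewrite /sy /= dotI0r dotI_addr !dot_delta.
move=> i j; apply: xor_false; have := Hg _ (proj1 (H i j)).
by rewrite /sy /= dotI0r dotI_addr !dot_delta.
Qed.


Local Open Scope ring_scope.

Lemma ord5 (P : 'I_5 -> Prop) : P k0 -> P k1 -> P k2 -> P k3 -> P k4 -> forall k, P k.
Proof.
move=> H0 H1 H2 H3 H4 [m Hm].
do 5 (case: m Hm => [|m] Hm; first by [rewrite (bool_irrelevance Hm isT)]).
by [].
Qed.

Definition tup (a0 a1 a2 a3 a4 : bool) : bits 5 :=
  [ffun k : 'I_5 => nth false [:: a0; a1; a2; a3; a4] k].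
Lemma tvE a0 a1 a2 a3 a4 : tensor_vec A (tup a0 a1 a2 a3 a4) = A a0 a1 a2 a3 a4.
Proof. by rewrite /tensor_vec !ffunE !inordK. Qed.

Definition hsh (a : {ffun Leg -> bool}) : {ffun 'I_n * 'I_d.+1 -> bool} :=
  [ffun ik => if ik.2 == ord_max then a ((ik.1, ord_max), k4) else a ((ik.1, inord ik.2), k3)].

Lemma hsh_w a i (j : 'I_d) : hsh a (i, widen_ord (leqnSn d) j) = a ((i, j), k3).
Proof.
rewrite ffunE /=.
have -> : (widen_ord (leqnSn d) j == ord_max) = false.
  by apply/negbTE; rewrite -val_eqE /= neq_ltn ltn_ord.
by congr (a (_, _)); congr pair; apply: val_inj; rewrite /= inordK.
Qed.

Lemma hsh_l a i (j : 'I_d) : pair_ok a -> hsh a (i, lift ord0 j) = a ((i, j), k4).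
Proof.
move=> /pair_okP [_ Ha2]; rewrite ffunE /=.
case: (altP (j =P ord_max)) => [-> | Hj].
  by rewrite (_ : lift ord0 ord_max == ord_max) //; apply/eqP/val_inj.
have Hj' : (j < d')%N.
  have := ltn_ord j; rewrite ltnS leq_eqVlt => /orP [/eqP E|//].
  by case/negP: Hj; apply/eqP/val_inj.
have -> : (lift ord0 j == ord_max) = false.
  by apply/negbTE; rewrite -val_eqE /= /bump leq0n /= eqSS neq_ltn Hj'.
have := Ha2 i (Ordinal Hj').
rewrite (_ : widen_ord (leqnSn d') (Ordinal Hj') = j); last by apply: val_inj.
move=> ->; congr (a (_, _)); congr pair; apply: val_inj.
by rewrite /= inordK /bump leq0n //= ltnS.
Qed.

Lemma hsh_0 a i : hsh a (i, ord0) = a (Lleg i).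
Proof. by rewrite (_ : ord0 = widen_ord (leqnSn d) ord0) ?hsh_w //; apply: val_inj. Qed.
Lemma hsh_max a i : hsh a (i, ord_max) = a (Rleg i).
Proof. by rewrite ffunE /= eqxx. Qed.

Definition cf (s w : {ffun Site -> bool}) (h : {ffun 'I_n * 'I_d.+1 -> bool}) (x : Site) : bits 5 :=
  tup (s x) (w (up x)) (w x) (h (x.1, widen_ord (leqnSn d) x.2)) (h (x.1, lift ord0 x.2)).

Lemma cf_shift g s w h x : pair_ok g.1 ->
  xorb_bits (cf s w h x) (rsite g x).1 =
  cf (xorf s [ffun y => g.1 (y, k0)]) (xorf w [ffun y => g.1 (y, k2)]) (xorf h (hsh g.1)) x.
Proof.
move=> pg; have [P1 _] := pair_okP _ pg.
apply/ffunP; apply: ord5; rewrite !ffunE /= ?ffunE //.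
- by rewrite P1.
- by have := hsh_w g.1 x.1 x.2; rewrite ffunE /= => ->; case: x.
- by have := hsh_l x.1 x.2 pg; rewrite ffunE /= => ->; case: x.
Qed.


Lemma xorfE (I : finType) (u v : {ffun I -> bool}) i : xorf u v i = u i (+) v i.
Proof. by rewrite ffunE. Qed.

Lemma xorf_inj (I : finType) (c : {ffun I -> bool}) : injective (fun u => xorf u c).
Proof.
move=> u v /= E; have : xorf (xorf u c) c = xorf (xorf v c) c by rewrite E.
by rewrite -!xorfA xorfK !xorf0.
Qed.

Definition bnd (h : {ffun 'I_n * 'I_d.+1 -> bool}) (t : bits (n + n)) : bool :=
  [forall i, (h (i, ord0) == t (lshift n i)) && (h (i, ord_max) == t (rshift n i))].

Lemma sign_sum g s w h t : g \in perp Dset -> bnd h t ->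
  \big[addb/false]_(x : Site) dotb (rsite g x).2 (cf s w h x) = dotb (restr outo g).2 t.
Proof.
move=> HgC /forallP Hb; have [Hs0 pa1 pa2] := C_facts HgC.
pose b := [ffun l : Leg => cf s w h l.1 l.2].
have pb : pair_ok b.
  apply/pair_okP; split; first by move=> x; rewrite !ffunE.
  move=> i j; rewrite !ffunE /=; congr (h (i, _)); by apply: val_inj.
transitivity (\big[addb/false]_(l : Leg) (g.2 l && b l)).
  rewrite sum_Leg; apply: eq_bigr => x _; rewrite /dotb; apply: eq_bigr => k _; by rewrite !ffunE.
rewrite pair_sum // /dotb big_split_ord /= -big_split /=; apply: eq_bigr => i _.
move: (Hb i) => /andP [/eqP H0 /eqP H1].
rewrite !ffunE outoL outoR /= -H0 -H1; congr (_ && h (_, _) (+) _ && h (_, _)); exact: val_inj.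
Qed.

Lemma bnd_shift g h t :
  bnd (xorf h (hsh g.1)) (xorb_bits t (restr outo g).1) = bnd h t.
Proof.
apply: eq_forallb => i; rewrite !xorfE hsh_0 hsh_max /xorb_bits !ffunE outoL outoR.
by case: (h _); case: (h _); case: (t _); case: (t _); case: (g.1 _); case: (g.1 _).
Qed.

Lemma analytic g : g \in SPhi -> g \in perp Dset -> restr outo g \in stab_group (peps_state A n d).
Proof.
move=> HgS HgC; have [Hs0 pa1 pa2] := C_facts HgC.
have Hst : forall x, rsite g x \in SA by move: HgS; rewrite inE => /forallP.
have Hex : forall x : Site, exists k : nat, forall y,
    'i ^+ k * pauli_act (rsite g x) (tensor_vec A) y = tensor_vec A y.
  by move=> x; case/stabP: (Hst x) => k Hk; exists k.
have [kf Hk] := fin_all_exists Hex.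
apply/stabP; exists (\sum_(x : Site) kf x)%N => t.
rewrite paE; symmetry.
pose ds : {ffun Site -> bool} := [ffun y => g.1 (y, k0)].
pose dw : {ffun Site -> bool} := [ffun y => g.1 (y, k2)].
pose dh := hsh g.1.
pose t' := xorb_bits t (restr outo g).1.
have Hterm : forall (s w : {ffun Site -> bool}) (h : {ffun 'I_n * 'I_d.+1 -> bool}) (x : Site), A (s x) (w (ordS' x.1, x.2)) (w x) (h (x.1, widen_ord (leqnSn d) x.2))
     (h (x.1, lift ord0 x.2)) = 'i ^+ kf x * (sg (dotb (rsite g x).2 (cf (xorf s ds) (xorf w dw) (xorf h dh) x)) *
      tensor_vec A (cf (xorf s ds) (xorf w dw) (xorf h dh) x)).
  move=> s w h x; have -> : A (s x) (w (ordS' x.1, x.2)) (w x) (h (x.1, widen_ord (leqnSn d) x.2))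
     (h (x.1, lift ord0 x.2)) = tensor_vec A (cf s w h x) by rewrite /cf tvE.
  by rewrite -(Hk x (cf s w h x)) paE (cf_shift _ _ _ _ pa1).
transitivity (\sum_(w : {ffun 'I_n * 'I_d -> bool})
  \sum_(h : {ffun 'I_n * 'I_d.+1 -> bool} | bnd h t)
  \sum_(s : {ffun 'I_n * 'I_d -> bool})
   ('i ^+ (\sum_(x : Site) kf x) * (sg (dotb (restr outo g).2 t') *
     \prod_(x : Site) tensor_vec A (cf (xorf s ds) (xorf w dw) (xorf h dh) x)))).
  rewrite /peps_state; apply: eq_bigr => w _; apply: eq_bigr => h Hh; apply: eq_bigr => s _.
  rewrite (eq_bigr _ (fun x _ => Hterm s w h x)).
  rewrite big_split big_split /= prodrXr -(big_morph sg sgD (erefl : sg false = 1)).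
  have Hb' : bnd (xorf h dh) t' by rewrite /t' bnd_shift.
  by rewrite (sign_sum _ _ HgC Hb').
rewrite mulrA; transitivity ('i ^+ (\sum_(x : Site) kf x) * sg (dotb (restr outo g).2 t') *
  \sum_(w : {ffun 'I_n * 'I_d -> bool})
  \sum_(h : {ffun 'I_n * 'I_d.+1 -> bool} | bnd h t)
  \sum_(s : {ffun 'I_n * 'I_d -> bool})
     \prod_(x : Site) tensor_vec A (cf (xorf s ds) (xorf w dw) (xorf h dh) x)).
  rewrite mulr_sumr; apply: eq_bigr => w _; rewrite mulr_sumr; apply: eq_bigr => h _.
  by rewrite mulr_sumr; apply: eq_bigr => s _; rewrite mulrA.
congr (_ * _); rewrite /peps_state.
rewrite [RHS](reindex_inj (@xorf_inj _ dw)); apply: eq_bigr => w _.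
rewrite [RHS](reindex_inj (@xorf_inj _ dh)) /=.
rewrite [RHS](eq_bigl (fun h => bnd h t)); last by move=> h; exact: (bnd_shift g h t).
apply: eq_bigr => h _.
rewrite [RHS](reindex_inj (@xorf_inj _ ds)); apply: eq_bigr => s _.
by apply: eq_bigr => x _; rewrite /cf tvE.
Qed.


Lemma main_nonzero : (exists t, peps_state A n d t != 0) ->
  forall x : pauli n, (forall z, z \in Z_L A n d -> pcommute x z) -> x \in S_L A n d.
Proof.
move=> Hnz x Hx.
set S := stab_group (peps_state A n d).
set T := [set restr outo g | g in SPhi :&: perp Dset].
have sTS : T \subset S.
  apply/subsetP => y /imsetP [g]; rewrite inE => /andP [H1 H2] ->.
  exact: analytic.
have pT : perp T \subset T.
  apply: D1.
  - exact: outo_inj.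
  - exact: SPhi_subsp.
  - exact: SPhi_lag.
  - exact: Dset_subsp.
  - exact: Dset_iso.
  - by move=> e /DsetP [].
have Siso : forall p q, p \in S -> q \in S -> sy p q = false.
  by move=> p q Hp Hq; apply: (stab_iso Hnz Hp Hq).
have sST : S \subset perp T.
  apply/subsetP => p Hp; apply/perpP => q Hq; apply: Siso => //; exact: (subsetP sTS).
have pS : perp S \subset S.
  apply: subset_trans (perp_anti sTS) _; exact: subset_trans pT sTS.
have := @partF _ _ (@lshift n n) (@lshift_inj n n) S (stab_subsp _) pS x.
apply; exact: Hx.
Qed.

End Peps.

Theorem corollary1 (A : tensor) (n d : nat) :
  is_stabilizer_tensor A -> (1 <= n)%N -> (1 <= d)%N ->
  forall x : pauli n,
    x \in S_L A n d <-> (forall z, z \in Z_L A n d -> pcommute x z).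
Proof.
move=> HA; case: n => // n' _; case: d => // d' _ x; split.
  move=> Hx z; rewrite inE => /andP [_ /forall_inP Hz].
  by have := Hz x Hx; rewrite /pcommute !sympE syC.
case: (boolP [exists t, (peps_state A n'.+1 d'.+1 t != 0)%R]) => [/existsP Hnz | Hz].
  exact: main_nonzero.
move=> _; have H0 : forall t, (peps_state A n'.+1 d'.+1 t = 0)%R.
  by move=> t; apply/eqP; apply: contraNT Hz => Ht; apply/existsP; exists t.
apply/imsetP; exists (emb (@lshift n'.+1 n'.+1) x).
  by rewrite /S_AND stab_zero.
by symmetry; exact: (restr_emb (@lshift_inj _ _) x).
Qed.
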